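(* Suppose $F$ is symmetric around $1/2$, i.e., $F(y)=1-F(1-y)$ for all $y\in[0,1]$, and $|M|\ge4$. Then there exists $x\in(0,1/2)$ such that the strategy $\sigma_{\mathrm{ex}}(x)$ described below is a symmetric Bayesian Nash equilibrium strategy of the coordination game with two rounds of communication. Strategy $\sigma_{\mathrm{ex}}(x)$, using designated distinct messages $e,m_L,m_R$ and four further messages for a random bit (any other message is interpreted as a fixed designated message): Round 1: a type $u$ sends $e$ if $u\le x$ or $u>1-x$; $m_L$ if $x<u\le1/2$; $m_R$ if $1/2<u\le1-x$. After round-1 pair $(m_L,m_L)$: both play $L$. After $(m_R,m_R)$: both play $R$. After $(m_L,m_R)$ (either order): in round 2 each player sends an independent uniformly random bit, and both play $L$ if the bits differ and $R$ if they are equal. After $(e,m_L)$ or $(e,m_R)$ (either order): in round 2 the $e$-sender sends $m_L$ if her type is $\le1/2$ and $m_R$ otherwise, while the moderate sender repeats her round-1 message; the $e$-sender then plays $L$ iff her type is $\le1/2$, and the $m_L$-sender (resp. $m_R$-sender) plays $L$ iff the $e$-sender's round-2 message is $m_L$ (resp. plays $R$ iff it is $m_R$), so that both coordinate on the $e$-sender's preferred action. After $(e,e)$: round-2 messages are irrelevant and each player plays $L$ iff her type is $\le1/2$.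
   Context: Two players; types drawn independently from a distribution on $[0,1]$ with continuous CDF $F$ and density $f>0$ on $[0,1]$. Each chooses $L$ or $R$; a player of type $u$ gets $1-u$ if both choose $L$, $u$ if both choose $R$, and $0$ otherwise. Coordination game with two rounds of communication: after learning types, players simultaneously send publicly observed costless messages from a finite set $M$ in round 1, observe them, then simultaneously send messages from $M$ in round 2 (which may depend on own type and round-1 messages), observe them, and then choose actions (which may depend on own type and all messages). A symmetric strategy is a Bayesian Nash equilibrium strategy if, when the opponent uses it, no type of a player can obtain a strictly higher expected payoff by any other (message and action) behavior. *)

(* Defs.v *)
From mathcomp Require Import all_boot all_order all_algebra.
From mathcomp Require Import all_classical all_reals all_analysis.
Import Order.TTheory GRing.Theory Num.Theory.

Set Implicit Arguments.
Unset Strict Implicit.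
Unset Printing Implicit Defensive.

Local Open Scope classical_set_scope.
Local Open Scope ring_scope.

Section CoordGame.
Variables (R : realType) (M : finType).

(* payoff of a player of type u: 1-u if both play L, u if both play R, else 0;
   a boolean action "true" means L *)
Definition pay (u : R) (myL oppL : bool) : R :=
  if myL && oppL then 1 - u else if ~~ myL && ~~ oppL then u else 0.

Definition avg (g : bool -> R) : R := (g false + g true) / 2.

Variables (x : R) (e mL mR b0 b1 d : M).

Definition sig1 (v : R) : M :=
  if (v <= x) || (1 - x < v) then e else if v <= 1 / 2 then mL else mR.

Definition interp (m : M) : M := if m \in [:: e; mL; mR] then m else d.

(* round-2 message of a type v, given own round-1 message a, the (interpreted)
   opponent round-1 message b, and own random bit r *)
Definition sig2 (v : R) (a b : M) (r : bool) : M :=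
  if a == e then (if b == e then e else if v <= 1 / 2 then mL else mR)
  else if b == e then a
  else if a == b then a
  else (if r then b1 else b0).

(* action (true = L) of a type v, given own round-1 message a, interpreted
   opponent round-1 message b, own random bit r, opponent round-2 message m2 *)
Definition sigA (v : R) (a b : M) (r : bool) (m2 : M) : bool :=
  if a == e then v <= 1 / 2
  else if b == e then (if a == mL then m2 == mL else m2 != mR)
  else if a == b then a == mL
  else r (+) (m2 == b1).

(* payoff of type u against type v when both follow sigma_ex(x),
   averaged over both players' random bits *)
Definition eq_outcome (u v : R) : R :=
  avg (fun r => avg (fun r' =>
    let a := sig1 u in let b := sig1 v in
    let ma := sig2 u a (interp b) r in
    let mb := sig2 v b (interp a) r' in
    pay u (sigA u a (interp b) r mb) (sigA v b (interp a) r' ma))).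

(* payoff of type u, using the (pure) behavior (m1, r2, act), against type v
   following sigma_ex(x), averaged over the opponent's random bit:
   m1 = own round-1 message, r2 n1 = own round-2 message after opponent's
   round-1 message n1, act n1 m2 n2 = own action (true = L). *)
Definition dev_outcome (u : R) (m1 : M) (r2 : M -> M) (act : M -> M -> M -> bool)
    (v : R) : R :=
  avg (fun r' =>
    let n1 := sig1 v in
    let b := interp m1 in
    let m2 := r2 n1 in
    let n2 := sig2 v n1 b r' in
    pay u (act n1 m2 n2) (sigA v n1 b r' m2)).

End CoordGame.

(* expectation over the opponent's type, distributed on [0,1] with density f *)
Definition EU (R : realType) (f : R -> R) (g : R -> R) : \bar R :=
  (\int[@lebesgue_measure R]_(v in `[0%R, 1%R]) (g v * f v)%:E)%E.

Definition density_cdf (R : realType) (f : R -> R) (y : R) : R :=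
  fine (\int[@lebesgue_measure R]_(t in `[0%R, y]) (f t)%:E)%E.

Definition sigma_ex_BNE (R : realType) (M : finType) (f : R -> R) (x : R)
    (e mL mR b0 b1 d : M) : Prop :=
  forall u : R, 0 <= u <= 1 ->
  forall (m1 : M) (r2 : M -> M) (act : M -> M -> M -> bool),
    (EU f (dev_outcome x e mL mR b0 b1 d u m1 r2 act)
       <= EU f (eq_outcome x e mL mR b0 b1 d u))%E.

(* Main.v *)
Require Import Defs.
From mathcomp Require Import all_boot all_order all_algebra.
From mathcomp Require Import all_classical all_reals all_analysis.
From mathcomp Require Import measurable_realfun lra.
Import Order.TTheory GRing.Theory Num.Theory.
Set Implicit Arguments.
Unset Strict Implicit.
Local Open Scope classical_set_scope.
Local Open Scope ring_scope.

Notation mu := (@lebesgue_measure _).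

Lemma itv_split0 (R : realType) (a b : R) : 0 <= a <= b ->
  [set` `[0, b]] = [set` `[0, a]] `|` [set` `]a, b]] :> set R.
Proof. by move=> /andP[a0 ab]; apply: itv_bndbnd_setU; rewrite bnd_simp. Qed.

Lemma itv_disj0 (R : realType) (a b : R) : disj_set [set` `[0, a]] [set` `]a, b]] :> Prop.
Proof.
apply/disj_setPS => t []; rewrite /= !in_itv /= => /andP[_ ta] /andP[aTt _].
by move: (lt_le_trans aTt ta); rewrite ltxx.
Qed.

Lemma mf_union (R : realType) (a b : R) (h : R -> R) : 0 <= a <= b ->
  measurable_fun (`[0, a] : set R) h -> measurable_fun (`]a, b] : set R) h ->
  measurable_fun (`[0, b] : set R) h.
Proof. by move=> ab m1 m2; rewrite (itv_split0 ab); apply/measurable_funU. Qed.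

Lemma split_itv (R : realType) (a b : R) (h : R -> R) : 0 <= a <= b ->
  measurable_fun (`[0, a] : set R) h -> measurable_fun (`]a, b] : set R) h ->
  (\int[mu]_(t in `[0%R, b]) (h t)%:E = \int[mu]_(t in `[0%R, a]) (h t)%:E
     + \int[mu]_(t in `]a, b]) (h t)%:E)%E.
Proof.
move=> ab m1 m2.
rewrite (itv_split0 ab); apply: integral_setU => //.
- by rewrite -(itv_split0 ab); apply/measurable_EFinP; exact: (mf_union ab m1 m2).
- exact: itv_disj0.
Qed.

Lemma piece_mf (R : realType) (A : set R) (g f : R -> R) c : measurable A ->
  measurable_fun A f -> (forall t, A t -> g t = c) ->
  measurable_fun A (fun t => g t * f t).
Proof.
move=> mA mf gc.
have mcf : measurable_fun A (fun t => c * f t).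
  by apply: measurable_funM => //; exact: measurable_cst.
by apply: eq_measurable_fun mcf => t; rewrite inE => At; rewrite gc.
Qed.

Lemma piece_int (R : realType) (A : set R) (g f : R -> R) c : measurable A ->
  measurable_fun A f -> 0 <= c -> (forall t, A t -> 0 <= f t) ->
  (forall t, A t -> g t = c) ->
  (\int[mu]_(t in A) (g t * f t)%:E = c%:E * \int[mu]_(t in A) (f t)%:E)%E.
Proof.
move=> mA mf c0 f0 gc.
transitivity (\int[mu]_(t in A) (c%:E * (f t)%:E))%E.
  by apply: eq_integral => t; rewrite inE => At; rewrite gc.
rewrite ge0_integralZl_EFin //.
- by apply/measurable_EFinP.
Qed.

Lemma EU_piece (R : realType) (f g : R -> R) (x : R) :
  measurable_fun (`[0%R, 1%R] : set R) f -> (forall t, 0 <= t <= 1 -> 0 < f t) ->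
  0 < x -> x < 1/2 ->
  (forall v, 0 <= v <= x -> g v = g 0) -> (forall v, x < v <= 1/2 -> g v = g (1/2)) ->
  (forall v, 1/2 < v <= 1 - x -> g v = g (1 - x)) -> (forall v, 1 - x < v <= 1 -> g v = g 1) ->
  0 <= g 0 -> 0 <= g (1/2) -> 0 <= g (1 - x) -> 0 <= g 1 ->
  EU f g = ((g 0)%:E * \int[mu]_(t in `[0%R, x]) (f t)%:E
          + (g (1/2))%:E * \int[mu]_(t in `]x, (1/2)%R]) (f t)%:E
          + (g (1 - x))%:E * \int[mu]_(t in `](1/2)%R, (1 - x)%R]) (f t)%:E
          + (g 1)%:E * \int[mu]_(t in `](1 - x)%R, 1%R]) (f t)%:E)%E.
Proof.
move=> mf fpos x0 x1 g0 g1 g2 g3 c0 c1 c2 c3.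
have subo : forall a b : R, 0 <= a -> b <= 1 -> [set` `]a, b]] `<=` [set` `[0%R, 1%R]].
  move=> a b a0 b1 t; rewrite /= !in_itv /= => /andP[at' tb]; apply/andP; split; lra.
have subc : forall b : R, b <= 1 -> [set` `[0%R, b]] `<=` [set` `[0%R, 1%R]].
  move=> b b1 t; rewrite /= !in_itv /= => /andP[at' tb]; apply/andP; split; lra.
have mf0 : measurable_fun (`[0%R, x] : set R) f.
  by apply: measurable_funS mf => //; apply: subc; lra.
have mfo : forall a b : R, 0 <= a -> b <= 1 -> measurable_fun (`]a, b] : set R) f.
  by move=> a b a0 b1; apply: measurable_funS mf => //; apply: subo.
have fo : forall a b : R, 0 <= a -> b <= 1 -> forall t, [set` `]a, b]] t -> 0 <= f t.
  by move=> a b a0 b1 t /(subo a b a0 b1) /=; rewrite in_itv /= => /fpos/ltW.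
have fc : forall t, [set` `[0%R, x]] t -> 0 <= f t.
  by move=> t /(subc x (ltW (lt_trans x1 _))) /=; rewrite in_itv /= => /(_ _)/fpos/ltW; apply; lra.
have G0 : forall t, [set` `[0%R, x]] t -> g t = g 0.
  by move=> t /=; rewrite in_itv /=; apply: g0.
have G1 : forall t, [set` `]x, 1/2]] t -> g t = g (1/2).
  by move=> t /=; rewrite in_itv /=; apply: g1.
have G2 : forall t, [set` `]1/2, 1 - x]] t -> g t = g (1 - x).
  by move=> t /=; rewrite in_itv /=; apply: g2.
have G3 : forall t, [set` `]1 - x, 1]] t -> g t = g 1.
  by move=> t /=; rewrite in_itv /=; apply: g3.
pose G := fun v => g v * f v.
have mG0 : measurable_fun (`[0%R, x] : set R) G by exact: piece_mf G0.
have mG1 : measurable_fun (`]x, 1/2] : set R) G by apply: piece_mf G1 => //; apply: mfo; lra.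
have mG2 : measurable_fun (`]1/2, 1 - x] : set R) G by apply: piece_mf G2 => //; apply: mfo; lra.
have mG3 : measurable_fun (`]1 - x, 1] : set R) G by apply: piece_mf G3 => //; apply: mfo; lra.
have h01 : 0 <= x <= 1/2 by apply/andP; split; lra.
have h12 : (0 <= 1/2 :> R) && (1/2 <= 1 - x) by apply/andP; split; lra.
have h23 : 0 <= 1 - x <= 1 by apply/andP; split; lra.
have mG01 := mf_union h01 mG0 mG1.
have mG012 := mf_union h12 mG01 mG2.
rewrite /EU (split_itv (h := G) h23) // (split_itv h12) // (split_itv h01) //.
rewrite /G.
rewrite (@piece_int R _ g f (g 0)) //.
rewrite (@piece_int R _ g f (g (1/2))) //; [|by apply: mfo; lra|by apply: fo; lra].
rewrite (@piece_int R _ g f (g (1 - x))) //; [|by apply: mfo; lra|by apply: fo; lra].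
rewrite (@piece_int R _ g f (g 1)) //; [by apply: mfo; lra|by apply: fo; lra].
Qed.

Lemma le4 (R : realType) (a b c d : \bar R) : (0 <= a)%E -> (0 <= b)%E -> (0 <= c)%E -> (0 <= d)%E ->
  [/\ (a <= a + b + c + d)%E, (b <= a + b + c + d)%E, (c <= a + b + c + d)%E & (d <= a + b + c + d)%E].
Proof.
move=> a0 b0 c0 d0; split.
- by apply: le_trans (leeDl _ d0); apply: le_trans (leeDl _ c0); exact: leeDl.
- by apply: le_trans (leeDl _ d0); apply: le_trans (leeDl _ c0); exact: leeDr.
- by apply: le_trans (leeDl _ d0); apply: leeDr; exact: adde_ge0.
- by apply: leeDr; rewrite !adde_ge0.
Qed.

Lemma fin_le1 (R : realType) (a s : \bar R) : (0 <= a)%E -> (a <= s)%E -> s = 1%E -> a = (fine a)%:E.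
Proof.
move=> a0 as' s1; rewrite fineK // ge0_fin_numE //.
by apply: le_lt_trans as' _; rewrite s1 ltey.
Qed.

Lemma Jvals (R : realType) (f : R -> R) (x : R) :
  measurable_fun (`[0%R, 1%R] : set R) f ->
  (forall t : R, 0 <= t <= 1 -> 0 < f t) ->
  (\int[mu]_(t in `[0%R, 1%R]) (f t)%:E)%E = 1%E ->
  (forall y : R, 0 <= y <= 1 -> density_cdf f y = 1 - density_cdf f (1 - y)) ->
  0 < x -> x < 1/2 ->
  let p := density_cdf f x in
  [/\ (\int[mu]_(t in `[0%R, x]) (f t)%:E = p%:E)%E,
      (\int[mu]_(t in `]x, (1/2)%R]) (f t)%:E = (1/2 - p)%:E)%E,
      (\int[mu]_(t in `](1/2)%R, (1 - x)%R]) (f t)%:E = (1/2 - p)%:E)%E &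
      (\int[mu]_(t in `](1 - x)%R, 1%R]) (f t)%:E = p%:E)%E].
Proof.
move=> mf fpos f1 sym x0 x1 p.
have subo : forall a b : R, 0 <= a -> b <= 1 -> [set` `]a, b]] `<=` [set` `[0%R, 1%R]].
  move=> a b a0 b1 t; rewrite /= !in_itv /= => /andP[at' tb]; apply/andP; split; lra.
have subc : forall b : R, b <= 1 -> [set` `[0%R, b]] `<=` [set` `[0%R, 1%R]].
  move=> b b1 t; rewrite /= !in_itv /= => /andP[at' tb]; apply/andP; split; lra.
have mfo : forall a b : R, 0 <= a -> b <= 1 -> measurable_fun (`]a, b] : set R) f.
  by move=> a b a0 b1; apply: measurable_funS mf => //; apply: subo.
have mfc : forall b : R, b <= 1 -> measurable_fun (`[0%R, b] : set R) f.
  by move=> b b1; apply: measurable_funS mf => //; apply: subc.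
have fo : forall a b : R, 0 <= a -> b <= 1 -> (0 <= \int[mu]_(t in `]a, b]) (f t)%:E)%E.
  move=> a b a0 b1; apply: integral_ge0 => t /(subo a b a0 b1) /=.
  by rewrite in_itv /= lee_fin => /fpos/ltW.
have fc : (0 <= \int[mu]_(t in `[0%R, x]) (f t)%:E)%E.
  apply: integral_ge0 => t /=; rewrite in_itv /= lee_fin => /andP[t0 tx].
  by apply/ltW/fpos; apply/andP; split; lra.
have h01 : (0 <= x :> R) && (x <= 1/2) by apply/andP; split; lra.
have h12 : (0 <= 1/2 :> R) && (1/2 <= 1 - x) by apply/andP; split; lra.
have h23 : (0 <= 1 - x :> R) && (1 - x <= 1) by apply/andP; split; lra.
have mx : measurable_fun (`[0%R, x] : set R) f by apply: mfc; lra.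
have mh : measurable_fun (`[0%R, (1/2)%R] : set R) f by apply: mfc; lra.
have m1x : measurable_fun (`[0%R, (1 - x)%R] : set R) f by apply: mfc; lra.
have mo1 : measurable_fun (`]x, (1/2)%R] : set R) f by apply: mfo; lra.
have mo2 : measurable_fun (`](1/2)%R, (1 - x)%R] : set R) f by apply: mfo; lra.
have mo3 : measurable_fun (`](1 - x)%R, 1%R] : set R) f by apply: mfo; lra.
have E12 := split_itv h01 mx mo1.
have E2 := split_itv h12 mh mo2.
have E3 := split_itv h23 m1x mo3.
have F1 := f1; rewrite E3 E2 E12 in F1.
have F0 : (0 <= \int[mu]_(t in `]x, (1/2)%R]) (f t)%:E)%E by apply: fo; lra.
have F2 : (0 <= \int[mu]_(t in `](1/2)%R, (1 - x)%R]) (f t)%:E)%E by apply: fo; lra.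
have F3 : (0 <= \int[mu]_(t in `](1 - x)%R, 1%R]) (f t)%:E)%E by apply: fo; lra.
have [L0 L1 L2 L3] := le4 fc F0 F2 F3.
move: (fin_le1 fc L0 F1) (fin_le1 F0 L1 F1) (fin_le1 F2 L2 F1) (fin_le1 F3 L3 F1).
move=> e0 e1 e2 e3.
have Hh := sym (1/2) (ltac:(lra)).
have Hx := sym x (ltac:(lra)).
rewrite (_ : 1 - 1/2 = 1/2 :> R) in Hh; last by lra.
rewrite /density_cdf E12 e0 e1 -EFinD /= in Hh.
rewrite /density_cdf E2 E12 e0 e1 e2 -!EFinD /= in Hx.
rewrite e0 e1 e2 e3 -!EFinD in F1; case: F1 => F1.
rewrite e0 e1 e2 e3 /p /density_cdf.
by split; congr EFin; lra.
Qed.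

Lemma exists_x (R : realType) (f : R -> R) :
  measurable_fun (`[0%R, 1%R] : set R) f ->
  (forall t : R, 0 <= t <= 1 -> 0 < f t) ->
  (\int[mu]_(t in `[0%R, 1%R]) (f t)%:E)%E = 1%E ->
  (forall y : R, 0 <= y <= 1 -> density_cdf f y = 1 - density_cdf f (1 - y)) ->
  exists x : R, [/\ 0 < x, x < 1/2 & x + density_cdf f x = 1/2].
Proof.
move=> mf fpos f1 sym.
have intf : mu.-integrable `[0%R, 1%R] (EFin \o f).
  apply/integrableP; split; first exact/measurable_EFinP.
  rewrite (_ : (\int[mu]_(x in _) `|(EFin \o f) x|)%E = 1%E) ?ltey //.
  rewrite -f1; apply: eq_integral => t; rewrite inE /= in_itv /= => t01.
  by rewrite ger0_norm //; apply/ltW/fpos.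
have inth : mu.-integrable `[0%R, (1/2)%R] (EFin \o f).
  apply: integrableS intf => //.
  by move=> t; rewrite /= !in_itv /= => /andP[? ?]; apply/andP; split; lra.
have cF := parameterized_integral_continuous (ltac:(lra) : (0 <= 1/2 :> R)) inth.
pose H := fun y : R => y + density_cdf f y.
have cH : {within `[0%R, (1/2)%R], continuous H}.
  move=> y; apply: continuousD; last exact: cF.
  by apply: continuous_subspaceT => z; exact: cvg_id.
have F0 : density_cdf f 0 = 0.
  by rewrite /density_cdf set_itv1 integral_set1.
have Fh : density_cdf f (1/2) = 1/2.
  have := sym (1/2) (ltac:(lra)).
  by rewrite (_ : 1 - 1/2 = 1/2 :> R); lra.
have H0 : H 0 = 0 by rewrite /H F0 addr0.
have H1 : H (1/2) = 1 by rewrite /H Fh; lra.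
have [c] := IVT (ltac:(lra) : (0 <= 1/2 :> R)) cH (v := 1/2) (ltac:(rewrite H0 H1; apply/andP; split; [rewrite ge_min; apply/orP; left; lra | rewrite le_max; apply/orP; right; lra])).
rewrite in_itv /= => /andP[c0 c1] Hc.
exists c; split => //.
- rewrite lt_neqAle c0 andbT; apply/eqP => c00; move: Hc; rewrite -c00 H0; lra.
- rewrite lt_neqAle c1 andbT; apply/eqP => c00; move: Hc; rewrite c00 H1; lra.
Qed.

Lemma bnd_e {R : realType} {u p : R} {a b c q1 q2 : bool} : 0 <= u <= 1 -> 0 <= p <= 1/2 ->
  (pay u a true + pay u a true) / 2 * p + (pay u b q1 + pay u b q1) / 2 * (1/2 - p)
  + (pay u c q2 + pay u c q2) / 2 * (1/2 - p) + (pay u a false + pay u a false) / 2 * p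
  <= (1 - p) * Num.max (1 - u) u.
Proof.
move=> /andP[u0 u1] /andP[p0 p1].
have m1 : 1 - u <= Num.max (1 - u) u by rewrite le_max lexx.
have m2 : u <= Num.max (1 - u) u by rewrite le_max lexx orbT.
move: (Num.max (1 - u) u) m1 m2 => m m1 m2.
have h1 : 0 <= p * (m - (1 - u)) by apply: mulr_ge0; lra.
have h2 : 0 <= p * (m - u) by apply: mulr_ge0; lra.
have h3 : 0 <= (1/2 - p) * (m - (1 - u)) by apply: mulr_ge0; lra.
have h4 : 0 <= (1/2 - p) * (m - u) by apply: mulr_ge0; lra.
have h5 : 0 <= (1/2 - p) * u by apply: mulr_ge0; lra.
have h6 : 0 <= p * u by apply: mulr_ge0; lra.
have h7 : 0 <= p * (1 - u) by apply: mulr_ge0; lra.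
have h8 : 0 <= (1/2 - p) * (1 - u) by apply: mulr_ge0; lra.
by case: a; case: b; case: c; case: q1; case: q2; rewrite /pay /=; lra.
Qed.

Lemma bnd_L {R : realType} {u p : R} {a1 a2 b c0 c1 q : bool} : 0 <= u <= 1 -> 0 <= p <= 1/2 ->
  (pay u a1 true + pay u a1 true) / 2 * p + (pay u b true + pay u b true) / 2 * (1/2 - p)
  + (pay u c0 q + pay u c1 (~~ q)) / 2 * (1/2 - p) + (pay u a2 false + pay u a2 false) / 2 * p
  <= p + (1/2 - p) * (1 - u) + (1/2 - p) / 2.
Proof.
move=> /andP[u0 u1] /andP[p0 p1].
have h5 : 0 <= (1/2 - p) * u by apply: mulr_ge0; lra.
have h6 : 0 <= p * u by apply: mulr_ge0; lra.
have h7 : 0 <= p * (1 - u) by apply: mulr_ge0; lra.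
have h8 : 0 <= (1/2 - p) * (1 - u) by apply: mulr_ge0; lra.
by case: a1; case: a2; case: b; case: c0; case: c1; case: q; rewrite /pay /=; lra.
Qed.

Lemma bnd_R {R : realType} {u p : R} {a1 a2 b0 b1 c q : bool} : 0 <= u <= 1 -> 0 <= p <= 1/2 ->
  (pay u a1 true + pay u a1 true) / 2 * p + (pay u b0 q + pay u b1 (~~ q)) / 2 * (1/2 - p)
  + (pay u c false + pay u c false) / 2 * (1/2 - p) + (pay u a2 false + pay u a2 false) / 2 * p
  <= p + (1/2 - p) * u + (1/2 - p) / 2.
Proof.
move=> /andP[u0 u1] /andP[p0 p1].
have h5 : 0 <= (1/2 - p) * u by apply: mulr_ge0; lra.
have h6 : 0 <= p * u by apply: mulr_ge0; lra.
have h7 : 0 <= p * (1 - u) by apply: mulr_ge0; lra.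
have h8 : 0 <= (1/2 - p) * (1 - u) by apply: mulr_ge0; lra.
by case: a1; case: a2; case: b0; case: b1; case: c; case: q; rewrite /pay /=; lra.
Qed.

Section S.
Variables (R : realType) (M : finType).
Variables (e mL mR b0 b1 d : M).
Hypotheses (HeL : e != mL) (HeR : e != mR) (HLR : mL != mR) (Hb : b0 != b1)
  (Hd : d \in [:: e; mL; mR]).

Lemma interp_e : interp e mL mR d e = e.
Proof. by rewrite /interp mem_head. Qed.
Lemma interp_L : interp e mL mR d mL = mL.
Proof. by rewrite /interp !inE eqxx orbT. Qed.
Lemma interp_R : interp e mL mR d mR = mR.
Proof. by rewrite /interp !inE eqxx !orbT. Qed.
Lemma interp_in m : interp e mL mR d m \in [:: e; mL; mR].
Proof. by rewrite /interp; case: ifP. Qed.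


Lemma comb (x p u : R) (m1 : M) (r2 : M -> M) (act : M -> M -> M -> bool) :
  x = 1/2 - p -> 0 < x -> x < 1/2 -> 0 <= p -> 0 <= u -> u <= 1 ->
  let dev := dev_outcome x e mL mR b0 b1 d u m1 r2 act in
  let eqo := eq_outcome x e mL mR b0 b1 d u in
  dev 0 * p + dev (1/2) * (1/2 - p) + dev (1 - x) * (1/2 - p) + dev 1 * p <=
  eqo 0 * p + eqo (1/2) * (1/2 - p) + eqo (1 - x) * (1/2 - p) + eqo 1 * p.
Proof.
move=> Hx x0 x1 p0 u0 u1.
have B1 : (0 <= x) by lra.
have B2 : (1/2 <= x) = false by apply/negP => ?; lra.
have B3 : (1 - x < 0) = false by apply/negP => ?; lra.
have B4 : (1 - x < 1/2) = false by apply/negP => ?; lra.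
have B5 : (0 <= 1/2 :> R) by lra.
have B6 : (1/2 <= 1/2 :> R) by lra.
have B7 : (1-x <= x) = false by apply/negP => ?; lra.
have B8 : (1 - x < 1-x) = false by apply/negP => ?; lra.
have B9 : (1-x <= 1/2) = false by apply/negP => ?; lra.
have B10 : (1 <= x) = false by apply/negP => ?; lra.
have B11 : (1-x < 1) by lra.
have B12 : (1 <= 1/2 :> R) = false by apply/negP => ?; lra.
have Hcase : [\/ [/\ u <= x, (1 - x < u) = false, u <= 1/2, u <= x & (0 <= (1/2 - p) * (1/2 - u) /\ Num.max (1 - u) u = 1 - u)],
   [/\ (u <= x) = false, (1 - x < u) = false, u <= 1/2, x <= u /\ u <= 1/2 & (0 <= (1/2 - p) * (1/2 - u) /\ Num.max (1 - u) u = 1 - u)],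
   [/\ (u <= x) = false, (1 - x < u) = false, (u <= 1/2) = false, 1/2 <= u /\ u <= 1 - x & (0 <= (1/2 - p) * (u - 1/2) /\ Num.max (1 - u) u = u)] |
   [/\ (u <= x) = false, (1 - x < u), (u <= 1/2) = false, 1 - x <= u & (0 <= (1/2 - p) * (u - 1/2) /\ Num.max (1 - u) u = u)]].
  have [ux|xu] := leP u x.
    apply: Or41; split => //; try (apply/negP => ?; lra); try lra.
    by split; [apply: mulr_ge0; lra | apply/max_idPl; lra].
  have [uh|hu] := leP u (1/2).
    apply: Or42; split => //; try (apply/negP => ?; lra); try lra.
    by split; [apply: mulr_ge0; lra | apply/max_idPl; lra].
  have [ux'|xu'] := leP u (1-x).
    apply: Or43; split => //; try (apply/negP => ?; lra); try lra.
    by split; [apply: mulr_ge0; lra | apply/max_idPr; lra].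
  apply: Or44; split => //; try (apply/negP => ?; lra); try lra.
  by split; [apply: mulr_ge0; lra | apply/max_idPr; lra].
have HLe := HeL; rewrite eq_sym in HLe. have HRe := HeR; rewrite eq_sym in HRe.
have HRL := HLR; rewrite eq_sym in HRL.
have P1 : 0 <= p * u by apply: mulr_ge0.
have P2 : 0 <= p * (1 - u) by apply: mulr_ge0; lra.
have P3 : 0 <= (1/2 - p) * u by apply: mulr_ge0; lra.
have P4 : 0 <= (1/2 - p) * (1 - u) by apply: mulr_ge0; lra.
have hu : 0 <= u <= 1 by apply/andP.
have hp : 0 <= p <= 1/2 by apply/andP; split; lra.
case: Hcase => -[U1 U2 U3 U4 [Q1 Mx]];
rewrite /= /dev_outcome /eq_outcome /sig1 /sig2 /sigA /= ?B1 ?B2 ?B3 ?B4 ?B5 ?B6 ?B7 ?B8 ?B9 ?B10 ?B11 ?B12 ?U1 ?U2 ?U3 /=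
  !interp_e !interp_L !interp_R;
have := interp_in m1; rewrite !inE => /or3P[] /eqP ->;
rewrite ?eqxx ?(negbTE HeL) ?(negbTE HeR) ?(negbTE HLR) ?(negbTE HLe) ?(negbTE HRe) ?(negbTE HRL) ?(negbTE Hb) /=.
all: rewrite /avg /=.
all: first [apply: le_trans (bnd_e hu hp) _; rewrite Mx | apply: le_trans (bnd_L hu hp) _ | apply: le_trans (bnd_R hu hp) _].
all: rewrite ?eqxx ?(negbTE Hb) ?(negbTE HLR) /pay /=.
all: lra.
Qed.
End S.


Lemma pay_ge0 (R : realType) (u : R) a b : 0 <= u <= 1 -> 0 <= pay u a b.
Proof. by move=> /andP[u0 u1]; rewrite /pay; case: a; case: b => /=; lra. Qed.

Lemma avg_ge0 (R : realType) (g : bool -> R) : (forall b, 0 <= g b) -> 0 <= avg g.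
Proof. by move=> h; rewrite /avg; apply: divr_ge0 => //; apply: addr_ge0. Qed.

Definition reg_const (R : realType) (x : R) (g : R -> R) := forall v w : R,
  (v <= x) = (w <= x) -> (1 - x < v) = (1 - x < w) -> (v <= 1/2) = (w <= 1/2) -> g v = g w.

Lemma EU_piece2 (R : realType) (f g : R -> R) (x : R) :
  measurable_fun (`[0%R, 1%R] : set R) f -> (forall t, 0 <= t <= 1 -> 0 < f t) ->
  0 < x -> x < 1/2 -> reg_const x g -> (forall v, 0 <= g v) ->
  EU f g = ((g 0)%:E * \int[mu]_(t in `[0%R, x]) (f t)%:E
          + (g (1/2))%:E * \int[mu]_(t in `]x, (1/2)%R]) (f t)%:E
          + (g (1 - x))%:E * \int[mu]_(t in `](1/2)%R, (1 - x)%R]) (f t)%:E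
          + (g 1)%:E * \int[mu]_(t in `](1 - x)%R, 1%R]) (f t)%:E)%E.
Proof.
move=> mf fpos x0 x1 Hg g0; apply: EU_piece => // v /andP[hv1 hv2]; apply: Hg;
  apply/idP/idP => ?; lra.
Qed.

Lemma dev_reg (R : realType) (M : finType) (x : R) (e mL mR b0 b1 d : M) u m1 r2 act :
  reg_const x (dev_outcome x e mL mR b0 b1 d u m1 r2 act).
Proof. by move=> v w h1 h2 h3; rewrite /dev_outcome /sig1 /sig2 /sigA h1 h2 h3. Qed.

Lemma eq_reg (R : realType) (M : finType) (x : R) (e mL mR b0 b1 d : M) u :
  reg_const x (eq_outcome x e mL mR b0 b1 d u).
Proof. by move=> v w h1 h2 h3; rewrite /eq_outcome /sig1 /sig2 /sigA h1 h2 h3. Qed.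

Theorem mainTheorem10 (R : realType) (M : finType) (f : R -> R) :
  measurable_fun (`[0%R, 1%R] : set R) f ->
  (forall t : R, 0 <= t <= 1 -> 0 < f t) ->
  (\int[@lebesgue_measure R]_(t in `[0%R, 1%R]) (f t)%:E)%E = 1%E ->
  (forall y : R, 0 <= y <= 1 -> density_cdf f y = 1 - density_cdf f (1 - y)) ->
  (4 <= #|M|)%N ->
  forall e mL mR b0 b1 d : M,
    e != mL -> e != mR -> mL != mR -> b0 != b1 ->
    d \in [:: e; mL; mR] ->
  exists x : R, 0 < x < 1 / 2 /\ sigma_ex_BNE f x e mL mR b0 b1 d.
Proof.
move=> mf fpos f1 sym _ e mL mR b0 b1 d HeL HeR HLR Hb Hd.
have [x [x0 x1 Hx]] := exists_x mf fpos f1 sym.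
exists x; split; first by apply/andP.
move=> u hu m1 r2 act.
have [J0 J1 J2 J3] := Jvals mf fpos f1 sym x0 x1.
have hu' := hu; case/andP: hu' => u0 u1.
have Hr1 : reg_const x (dev_outcome x e mL mR b0 b1 d u m1 r2 act) by exact: dev_reg.
have Hr2 : reg_const x (eq_outcome x e mL mR b0 b1 d u) by exact: eq_reg.
have Hn1 : forall v, 0 <= dev_outcome x e mL mR b0 b1 d u m1 r2 act v.
  by move=> v; apply: avg_ge0 => r; apply: pay_ge0.
have Hn2 : forall v, 0 <= eq_outcome x e mL mR b0 b1 d u v.
  by move=> v; apply: avg_ge0 => r; apply: avg_ge0 => r'; apply: pay_ge0.
rewrite (EU_piece2 mf fpos x0 x1 Hr1 Hn1) (EU_piece2 mf fpos x0 x1 Hr2 Hn2).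
rewrite J0 J1 J2 J3 -!EFinM -!EFinD lee_fin.
apply: (@comb R M e mL mR b0 b1 d HeL HeR HLR Hb Hd x (density_cdf f x) u m1 r2 act); lra.
Qed.
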